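(* Let $n\ge2$, let $A\in\mathbb{R}^{n\times n}$ be Metzler, output unstable and nonsingular, $b_0\in\mathbb{R}^n_{\ge0}$, $r>0$, $g_0:=-e_n^TA^{-1}b_0$, $g_n:=-e_n^TA^{-1}e_n$, $u_*:=(g_0-r)/(g_nr)$. Then $\bar A:=A-u_*e_ne_n^T$ is Hurwitz stable if and only if $g_0<0$.
   Context: $S:=[e_1\ \cdots\ e_{n-1}]$, $e_i$ standard basis vectors. Metzler: all off-diagonal entries nonnegative. Hurwitz stable: all eigenvalues have negative real part. $M$ is output unstable if $S^TMS$ is Hurwitz stable and $e_n^TMe_n>0$. *)

(* Defs.v *)
(* real matrices over an arbitrary real closed field R,
   eigenvalues taken in the algebraic closure R[i] (complex R). *)
From HB Require Import structures.
From mathcomp Require Import all_boot all_order all_algebra.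
From mathcomp Require Import complex.
Set Implicit Arguments. Unset Strict Implicit. Unset Printing Implicit Defensive.
Import Order.TTheory GRing.Theory Num.Theory.
Local Open Scope ring_scope.

Definition metzler (R : numDomainType) (k : nat) (M : 'M[R]_k) : Prop :=
  forall i j : 'I_k, i != j -> 0 <= M i j.

Definition eigenvalue_C (R : rcfType) (k : nat) (M : 'M[R]_k) (z : R[i]) : Prop :=
  root (map_poly (fun x : R => (x%:C)%C) (char_poly M)) z.

Definition hurwitz (R : rcfType) (k : nat) (M : 'M[R]_k) : Prop :=
  forall z : R[i], eigenvalue_C M z -> Re z < 0.

(* Matrices are of size n = m.+1, so that the last index e_n exists. *)
Definition e_last (R : pzRingType) (m : nat) : 'cV[R]_m.+1 := delta_mx ord_max 0.

Definition Smx (R : pzRingType) (m : nat) : 'M[R]_(m.+1, m) :=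
  \matrix_(i < m.+1, j < m) (i == widen_ord (leqnSn m) j)%:R.

Definition output_unstable (R : rcfType) (m : nat) (M : 'M[R]_m.+1) : Prop :=
  hurwitz ((Smx R m)^T *m M *m Smx R m) /\
  0 < ((e_last R m)^T *m M *m e_last R m) 0 0.

(* Main.v *)
Require Import Defs.
From HB Require Import structures.
From mathcomp Require Import all_boot all_order all_algebra.
From mathcomp Require Import complex polyrcf ring.
Import Order.TTheory GRing.Theory Num.Theory.
Set Implicit Arguments. Unset Strict Implicit. Unset Printing Implicit Defensive.
Local Open Scope complex_scope.
Local Open Scope ring_scope.

Lemma charp (R : comNzRingType) k (M : 'M[R]_k) t :
  (char_poly M).[t] = \det (t%:M - M).
Proof.
rewrite /char_poly -[_.[t]]/(horner_eval t _) -det_map_mx; congr determinant.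
apply/matrixP => i j; rewrite !mxE /horner_eval.
by case: (i == j); rewrite /= ?mulr1n ?mulr0n horner_evalE !hornerE.
Qed.

Lemma posP (R : rcfType) (p : {poly R}) c : 0 < lead_coef p ->
  (forall x, c <= x -> ~~ root p x) -> forall x, c <= x -> 0 < p.[x].
Proof.
move=> lc nr; have [n Hn] := poly_pinfty_gt_lc lc => x cx.
rewrite ltNge; apply/negP => px.
have hT : 0 <= p.[Num.max x n] by apply: le_trans (ltW lc) (Hn _ _); rewrite le_max lexx orbT.
have [y /andP[y1 _]] : {y | y \in `[x, Num.max x n] & root p y}.
  apply: polyrcf.poly_ivt; first by rewrite le_max lexx.
  exact: mulr_le0_ge0.
by move=> ry; move: (nr y (le_trans cx y1)); rewrite ry.
Qed.

Section Real.
Variable R : rcfType.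

Lemma cmp k (M : 'M[R]_k) (u v : 'cV[R]_k) : metzler M -> (forall i, 0 < u i 0) ->
  (forall i, (M *m u) i 0 < 0) -> (forall i, (M *m v) i 0 <= 0) ->
  forall i, 0 <= v i 0.
Proof.
move=> mM up Mu Mv i; rewrite leNgt; apply/negP => vi.
pose F j := v j 0 / u j 0.
case: (@arg_minP _ _ _ i xpredT F isT) => i1 _ Hmin.
set tau := F i1.
have tneg : tau < 0.
  apply: le_lt_trans (Hmin i isT) _; by rewrite /F ltr_pdivrMr // mul0r.
pose w := v - tau *: u.
have w_ge0 j : 0 <= w j 0.
  rewrite !mxE subr_ge0 -ler_pdivlMr //; exact: Hmin.
have wi1 : w i1 0 = 0.
  by rewrite !mxE /tau /F divfK ?subrr // gt_eqF.
have h1 : 0 <= (M *m w) i1 0.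
  rewrite mxE; apply: sumr_ge0 => j _.
  have [->|ne] := eqVneq j i1; first by rewrite wi1 mulr0.
  by apply: mulr_ge0 => //; apply: mM; rewrite eq_sym.
have h2 : (M *m w) i1 0 < 0.
  have -> : (M *m w) i1 0 = (M *m v) i1 0 - tau * (M *m u) i1 0.
    by rewrite /w mulmxBr -scalemxAr !mxE.
  apply: (@le_lt_trans _ _ (0 - tau * (M *m u) i1 0)).
    by rewrite lerD2r.
  by rewrite sub0r oppr_lt0 nmulr_rgt0.
by move: (lt_le_trans h2 h1); rewrite ltxx.
Qed.


Definition posc k (u : 'cV[R]_k) := forall i, 0 < u i 0.
Definition negc k (u : 'cV[R]_k) := forall i, u i 0 < 0.
Definition goodM k (M : 'M[R]_k) := exists2 u, posc u & negc (M *m u).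

Lemma invnn k (M : 'M[R]_k) : metzler M -> goodM M -> M \in unitmx ->
  forall i j, 0 <= - invmx M i j.
Proof.
move=> mM [u up Mu] uM i j.
pose v := - invmx M *m delta_mx j (0 : 'I_1).
have -> : - invmx M i j = v i 0 by rewrite /v -colE !mxE.
apply: (cmp mM up Mu) => i'.
rewrite /v mulNmx mulmxN mulmxA mulmxV // mul1mx !mxE oppr_le0.
by case: (_ && _).
Qed.

Lemma schur k (C : 'M[R]_k) (a : 'cV_k) (b : 'rV_k) (d : 'M_1) :
  C \in unitmx ->
  \det (block_mx C a b d) = \det C * (d - b *m invmx C *m a) 0 0.
Proof.
move=> uC.
have -> : block_mx C a b d = block_mx 1%:M 0 (b *m invmx C) 1%:M *m
                            block_mx C a 0 (d - b *m invmx C *m a).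
  rewrite mulmx_block !mul1mx !mul0mx !addr0 ?add0r -mulmxA mulVmx // mulmx1.
  by rewrite addrC subrK.
by rewrite det_mulmx det_lblock det_ublock !det1 !mul1r det_mx11.
Qed.

Lemma metzler_blocks k (C : 'M[R]_k) (a : 'cV_k) (b : 'rV_k) (d : 'M_1) :
  metzler (block_mx C a b d) ->
  [/\ metzler C, forall i, 0 <= a i 0 & forall j, 0 <= b 0 j].
Proof.
move=> mM; split.
- move=> i j ne; rewrite -(block_mxEul C a b d); apply: mM.
  by apply: contra ne => /eqP /lshift_inj ->.
- by move=> i; rewrite -(block_mxEur C a b d i 0); apply: mM; rewrite eq_lrshift.
- by move=> j; rewrite -(block_mxEdl C a b d 0 j); apply: mM; rewrite eq_rlshift.
Qed.

Lemma step k (C : 'M[R]_k) (a : 'cV_k) (b : 'rV_k) (d : 'M_1) :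
  metzler (block_mx C a b d) -> goodM C -> C \in unitmx ->
  (d - b *m invmx C *m a) 0 0 < 0 -> goodM (block_mx C a b d).
Proof.
move=> mM gC uC sneg; have [mC a0 b0] := metzler_blocks mM.
have [u1 u1p Cu1] := gC.
pose x := - invmx C *m a.
have x0 i : 0 <= x i 0.
  rewrite mxE; apply: sumr_ge0 => l _; apply: mulr_ge0 => //.
  by rewrite ?mxE; apply: invnn.
set s := (d - b *m invmx C *m a) 0 0 in sneg.
pose beta := (b *m u1) 0 0.
have beta0 : 0 <= beta.
  rewrite /beta mxE; apply: sumr_ge0 => l _; apply: mulr_ge0 => //; exact: ltW.
pose eps := - s / (beta + 1).
have eps0 : 0 < eps by rewrite divr_gt0 ?oppr_gt0 // ltr_wpDl.
have epsb : eps * beta < - s.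
  rewrite /eps mulrAC ltr_pdivrMr ?ltr_wpDl // mulrDr mulr1 ltrDl oppr_gt0 //.
exists (col_mx (x + eps *: u1) (1%:M : 'M[R]_1)).
  move=> i; rewrite -(splitK i); case: (split i) => j /=.
    rewrite col_mxEu; move: (x0 j) (u1p j); rewrite !mxE => h1 h2.
    by apply: ltr_wpDl h1 _; exact: mulr_gt0.
  by rewrite col_mxEd !mxE ord1.
rewrite mul_block_col => i; rewrite -(splitK i); case: (split i) => j /=.
  rewrite col_mxEu mulmx1 mulmxDr /x mulmxA mulmxN mulmxV // mulNmx mul1mx -scalemxAr.
  by rewrite addrAC addNr add0r !mxE pmulr_rlt0 //; move: (Cu1 j); rewrite mxE.
rewrite col_mxEd ord1 mulmxDr -scalemxAr /x mulmxA mulmxN mulNmx.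
have -> : (- (b *m invmx C *m a) + eps *: (b *m u1) + d *m (1%:M : 'M[R]_1)) 0 0
   = s + eps * beta.
  by rewrite /s /beta !mxE big_ord1 !mxE eqxx /=; ring.
by rewrite -ltrBrDl sub0r.
Qed.


Definition Hpos k (M : 'M[R]_k) := forall t, 0 <= t -> 0 < \det (t%:M - M).

Lemma castP (P : forall n, 'M[R]_n -> Prop) n n' (e : n = n') (M : 'M_n) :
  P n M -> P n' (castmx (e, e) M).
Proof. by case: n' / e; rewrite castmx_id. Qed.

Lemma trchar k (N : 'M[R[i]]_k) : char_poly N^T = char_poly N.
Proof.
rewrite /char_poly -det_tr; congr determinant; apply/matrixP=> i j.
by rewrite !mxE eq_sym.
Qed.

Lemma realC_Re (x : R) : 'Re ((x%:C)%C : R[i]) = (x%:C)%C.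
Proof. by apply/Creal_ReP/complex_realP; exists x. Qed.

Lemma hurwitz_Hpos k (M : 'M[R]_k) : hurwitz M -> Hpos M.
Proof.
move=> hM t t0; rewrite -charp; apply: (posP (c := 0)) => //.
  by have /monicP -> := char_poly_monic M.
move=> x x0; apply/negP => rx.
have := hM (x%:C)%C; rewrite /eigenvalue_C.
have -> : root (map_poly (fun x0 : R => (x0%:C)%C) (char_poly M)) (x%:C)%C.
  exact: (rmorph_root (real_complex R)).
move=> /(_ isT); rewrite realC_Re => h.
have : (0 : R[i]) <= (x%:C)%C by rewrite ler0c.
by move=> h0; have := lt_le_trans h h0; rewrite ltxx.
Qed.

Lemma gersh k (M : 'M[R]_k) : metzler M -> goodM M -> hurwitz M.
Proof.
move=> mM [u up Mu] z ev.
have ev' : eigenvalue ((map_mx (real_complex R) M)^T) z.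
  by rewrite eigenvalue_root_char trchar -map_char_poly.
case/eigenvalueP: ev' => v Hv vn0.
pose U j := ((u j 0)%:C)%C.
pose y j := `|v 0 j| / U j.
have Up j : 0 < U j by rewrite /U ltcE /= eqxx up.
have yreal j : y j \is Num.real.
  by rewrite /y realM ?normr_real // realV; apply: gtr0_real.
have [j0 vj0] : exists j, v 0 j != 0.
  apply/existsP; apply: contraR vn0 => /existsPn H; apply/eqP/matrixP => a b.
  by rewrite ord1 mxE; apply/eqP; move: (H b); rewrite negbK.
case: (@real_arg_maxP _ _ j0 xpredT y isT (fun j _ => yreal j)) => i _ Hmax.
have yj0 : 0 < y j0 by rewrite /y divr_gt0 ?normr_gt0.
have yi : 0 < y i := lt_le_trans yj0 (Hmax j0 isT).
pose c j := ((M i j)%:C)%C.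
have E : z * v 0 i = \sum_j c j * v 0 j.
  have := congr1 (fun A : 'rV[R[i]]_k => A 0 i) Hv; rewrite !mxE => <-.
  by apply: eq_bigr => j _; rewrite !mxE mulrC.
have E2 : (z - c i) * v 0 i = \sum_(j | j != i) c j * v 0 j.
  by rewrite mulrBl E (bigD1 i) //= addrAC subrr add0r.
have vU j : `|v 0 j| = y j * U j by rewrite /y divfK // gt_eqF.
have ineq1 : `|z - c i| * `|v 0 i| <= \sum_(j | j != i) c j * (y i * U j).
  rewrite -normrM E2; apply: le_trans (ler_norm_sum _ _ _) _.
  apply: ler_sum => j ne; rewrite normrM vU.
  have cj : 0 <= c j by rewrite /c ler0c; apply: mM; rewrite eq_sym.
  rewrite ger0_norm //; apply: ler_wpM2l => //.
  by apply: ler_wpM2r; [exact: ltW | exact: Hmax].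
have S : \sum_j c j * U j = (((M *m u) i 0)%:C)%C.
  by rewrite mxE rmorph_sum; apply: eq_bigr => j _; rewrite rmorphM.
have ineq3 : \sum_(j | j != i) c j * U j < - (c i * U i).
  rewrite (bigD1 i) //= in S; rewrite -subr_lt0 opprK addrC S.
  by rewrite ltcE /= eqxx Mu.
have key : `|z - c i| * (y i * U i) < - c i * (y i * U i).
  move: ineq1; rewrite vU => h1; apply: le_lt_trans h1 _.
  have -> : \sum_(j | j != i) c j * (y i * U j) = y i * \sum_(j | j != i) c j * U j.
    by rewrite mulr_sumr; apply: eq_bigr => j _; ring.
  have -> : - c i * (y i * U i) = y i * (- (c i * U i)) by ring.
  by rewrite ltr_pM2l.
rewrite ltr_pM2r ?(mulr_gt0 yi (Up i)) // in key.
have := le_lt_trans (leif_Re_Creal _).1 key.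
by rewrite raddfB /= /c realC_Re ltrBlDr addNr.
Qed.


Lemma detN k (A : 'M[R]_k) : \det (- A) = (-1) ^+ k * \det A.
Proof. by rewrite -scaleN1r detZ. Qed.

Lemma unitmxN k (A : 'M[R]_k) : (- A \in unitmx) = (A \in unitmx).
Proof. by rewrite -scaleN1r unitmxZ // unitrN1. Qed.

Lemma invmxN k (A : 'M[R]_k) : A \in unitmx -> invmx (- A) = - invmx A.
Proof.
move=> uA; rewrite -scaleN1r invmxZ ?invrN1 ?scaleN1r //.
by rewrite -scaleN1r unitmxZ ?unitrN1.
Qed.

Lemma unit_of_det k (A : 'M[R]_k) (t : R) : 0 < \det (t%:M - A) ->
  t%:M - A \in unitmx.
Proof. by move=> h; rewrite unitmxE unitfE gt_eqF. Qed.

Lemma schurT k (C : 'M[R]_k) (a : 'cV_k) (b : 'rV_k) (d : 'M_1) t :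
  t%:M - C \in unitmx ->
  \det (t%:M - block_mx C a b d) =
  \det (t%:M - C) * (t - d 0 0 - (b *m invmx (t%:M - C) *m a) 0 0).
Proof.
move=> uC.
have -> : t%:M - block_mx C a b d = block_mx (t%:M - C) (- a) (- b) (t%:M - d).
  by rewrite (scalar_mx_block k 1) opp_block_mx add_block_mx !add0r.
rewrite schur //; congr (_ * _).
by rewrite mulNmx mulmxN mulNmx opprK !mxE eqxx /= mulr1n.
Qed.

Lemma metzler_shift k (C : 'M[R]_k) t : metzler C -> metzler (C - t%:M).
Proof.
move=> mC i j ne; rewrite !mxE (negPf ne) mulr0n subr0; exact: mC.
Qed.

Lemma root_ge (p : {poly R}) c : 0 < lead_coef p -> p.[c] <= 0 ->
  exists2 x, c <= x & root p x.
Proof.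
move=> lc pc; have [n Hn] := poly_pinfty_gt_lc lc.
have hT : 0 <= p.[Num.max c n].
  by apply: le_trans (ltW lc) (Hn _ _); rewrite le_max lexx orbT.
have [y /andP[y1 _] ry] : {y | y \in `[c, Num.max c n] & root p y}.
  apply: polyrcf.poly_ivt; first by rewrite le_max lexx.
  exact: mulr_le0_ge0.
by exists y.
Qed.

Lemma Lblock k (IH : forall M : 'M[R]_k, metzler M -> Hpos M -> goodM M)
  (C : 'M[R]_k) (a : 'cV_k) (b : 'rV_k) (d : 'M_1) :
  metzler (block_mx C a b d) -> Hpos (block_mx C a b d) ->
  goodM (block_mx C a b d).
Proof.
move=> mM HM; have [mC a0 b0] := metzler_blocks mM.
pose p := char_poly C.
have lcp : lead_coef p = 1 by have /monicP -> := char_poly_monic C.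
have pn0 : p != 0 by rewrite -lead_coef_eq0 lcp oner_eq0.
have HC : Hpos C.
  move=> t1 t10; rewrite ltNge; apply/negP => ht1.
  have [x0 x0t rx0] : exists2 x, t1 <= x & root p x.
    by apply: root_ge; rewrite ?lcp ?ltr01 // charp.
  set B := cauchy_bound p.
  have x0B : x0 < B.
    apply: le_lt_trans (ler_norm x0) _; apply: cauchy_boundP => //.
    exact/rootP.
  case: (prev_rootP p (t1 - 1) B) => [p0 | y _ py yin ynr | c' _ _ nr].
  - by rewrite p0 eqxx in pn0.
  - have x0y : x0 <= y.
      rewrite leNgt; apply/negP => yx0.
      by move: (ynr x0); rewrite in_itv /= yx0 x0B rx0 => /(_ isT).
    have y0 : 0 <= y by apply: le_trans t10 (le_trans x0t x0y).
    have nry z : y < z -> ~~ root p z.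
      move=> yz; have [zB|Bz] := ltP z B.
        by apply: ynr; rewrite in_itv /= yz zB.
      by apply: (ge_cauchy_bound pn0); rewrite in_itv /= Bz.
    have ppos t : y < t -> 0 < p.[t].
      move=> yt; apply: (posP (c := t)); rewrite ?lcp ?ltr01 //.
      by move=> z tz; apply: nry; apply: lt_le_trans yt tz.
    have cmpP t : y < t ->
        \det (t%:M - block_mx C a b d) <= p.[t] * (t - d 0 0).
      move=> yt.
      have t0 : 0 <= t by apply: le_trans y0 (ltW yt).
      have uT : t%:M - C \in unitmx.
        by apply: unit_of_det; rewrite -charp; apply: ppos.
      have gT : goodM (C - t%:M).
        apply: IH; first exact: metzler_shift.
        move=> x x0'.
        have -> : x%:M - (C - t%:M) = (x + t)%:M - C.
          by rewrite opprB addrA raddfD.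
        rewrite -charp; apply: ppos; apply: lt_le_trans yt _.
        by rewrite lerDr.
      have uT' : C - t%:M \in unitmx.
        by rewrite -opprB unitmxN.
      have Xnn i j : 0 <= invmx (t%:M - C) i j.
        have := invnn (metzler_shift t mC) gT uT' i j.
        by rewrite -[t%:M - C]opprB invmxN // mxE.
      rewrite schurT // -charp ler_pM2l ?ppos //.
      rewrite lerBlDr lerDl mxE; apply: sumr_ge0 => l _.
      apply: mulr_ge0 => //; rewrite mxE; apply: sumr_ge0 => l' _.
      by apply: mulr_ge0.
    pose P := char_poly (block_mx C a b d).
    pose q := p * ('X - (d 0 0)%:P).
    have Py : 0 < P.[y] by rewrite /P charp; apply: HM.
    have qy : q.[y] = 0 by rewrite /q hornerM py mul0r.
    pose e := P.[y] / 2.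
    have e0 : 0 < e by rewrite divr_gt0.
    have [d1 d10 Hd1] := poly_cont y P e0.
    have [d2 d20 Hd2] := poly_cont y q e0.
    pose t := y + Num.min d1 d2 / 2.
    have m0 : 0 < Num.min d1 d2 / 2 by rewrite divr_gt0 // lt_min d10.
    have yt : y < t by rewrite /t ltrDl.
    have dist : `|t - y| < Num.min d1 d2.
      rewrite /t addrC addKr ger0_norm ?ltW //.
      by rewrite ltr_pdivrMr // ltr_pMr ?ltr1n // lt_min d10.
    have m1 : Num.min d1 d2 <= d1 by rewrite ge_min lexx.
    have m2 : Num.min d1 d2 <= d2 by rewrite ge_min lexx orbT.
    have := Hd1 t (lt_le_trans dist m1).
    have := Hd2 t (lt_le_trans dist m2).
    rewrite !ltr_distl qy => /andP[_ hq] /andP[hP _].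
    have := cmpP t yt; rewrite -charp.
    have -> : p.[t] * (t - d 0 0) = q.[t] by rewrite /q hornerM !hornerE.
    move=> hPq.
    have : P.[y] - e < e.
      rewrite add0r in hq; exact: lt_le_trans hP (le_trans hPq (ltW hq)).
    by rewrite /e ltrBlDr -splitr ltxx.
  - suff : x0 \in `]t1 - 1, B[ by move/nr; rewrite rx0.
    rewrite in_itv /= x0B andbT; apply: lt_le_trans x0t.
    by rewrite ltrBlDr ltrDl ltr01.
have uC0 := unit_of_det (HC 0 (lexx 0)).
have uC : C \in unitmx by move: uC0; rewrite raddf0 sub0r unitmxN.
have gC := IH C mC HC.
apply: step => //.
have := HM 0 (lexx 0); rewrite schurT //.
rewrite raddf0 sub0r invmxN // mulmxN mulNmx.
have hC := HC 0 (lexx 0); rewrite raddf0 sub0r in hC.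
rewrite pmulr_rgt0 // !mxE sub0r.
by rewrite -opprD oppr_gt0.
Qed.


Lemma Lmain k (M : 'M[R]_k) : metzler M -> Hpos M -> goodM M.
Proof.
elim: k M => [|k IH] M mM HM.
  by exists 0 => [] [].
have e : (k + 1 = k.+1)%N by rewrite addn1.
pose M' := castmx (esym e, esym e) M.
suff : goodM M'.
  by move/(castP (P := fun n (X : 'M[R]_n) => goodM X) e); rewrite castmxKV.
rewrite -(submxK M'); apply: Lblock => //; rewrite submxK.
  exact: (castP (P := fun n (X : 'M[R]_n) => metzler X) (esym e) mM).
exact: (castP (P := fun n (X : 'M[R]_n) => Hpos X) (esym e) HM).
Qed.


Lemma dXd n (X : 'M[R]_n) i j :
  ((delta_mx i (0 : 'I_1))^T *m X *m delta_mx j (0 : 'I_1)) 0 0 = X i j.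
Proof. by rewrite trmx_delta -rowE -colE !mxE. Qed.

Lemma SAS m (X : 'M[R]_m.+1) i j :
  ((Smx R m)^T *m X *m Smx R m) i j =
  X (widen_ord (leqnSn m) i) (widen_ord (leqnSn m) j).
Proof.
rewrite mxE (bigD1 (widen_ord (leqnSn m) j)) //= big1 ?addr0; last first.
  by move=> l /negPf ne; rewrite [Smx R m l j]mxE ne mulr0.
rewrite [Smx R m _ j]mxE eqxx mulr1 mxE (bigD1 (widen_ord (leqnSn m) i)) //=.
rewrite big1 ?addr0; last first.
  by move=> l /negPf ne; rewrite !mxE ne mul0r.
by rewrite !mxE eqxx mul1r.
Qed.

End Real.

Theorem mainTheorem12 (R : rcfType) (m : nat) (hm : (1 <= m)%N)
  (A : 'M[R]_m.+1) (b0 : 'cV[R]_m.+1) (r : R) :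
  metzler A -> output_unstable A -> A \in unitmx ->
  (forall i, 0 <= b0 i 0) -> 0 < r ->
  let en := e_last R m in
  let g0 := - ((en^T *m invmx A *m b0) 0 0) in
  let gn := - ((en^T *m invmx A *m en) 0 0) in
  let ustar := (g0 - r) / (gn * r) in
  (hurwitz (A - ustar *: (en *m en^T)) <-> g0 < 0).
Proof.
move=> mA [hS dpos] uA b0p rp en g0 gn ustar.
have e : (m + 1 = m.+1)%N by rewrite addn1.
pose cst (X : 'M[R]_m.+1) : 'M[R]_(m + 1) := castmx (esym e, esym e) X.
have cstE X i j : castmx (esym e, esym e) X i j = X (cast_ord e i) (cast_ord e j).
  by rewrite castmxE; congr (X _ _); apply: val_inj.
pose C := ulsubmx (cst A); pose a := ursubmx (cst A).
pose b := dlsubmx (cst A); pose d := drsubmx (cst A).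
have hA' : cst A = block_mx C a b d by rewrite submxK.
have Cw i j : C i j = A (widen_ord (leqnSn m) i) (widen_ord (leqnSn m) j).
  by rewrite /C /cst !mxE cstE; congr (A _ _); apply: val_inj.
have dd : d 0 0 = A ord_max ord_max.
  by rewrite /d /cst !mxE cstE; congr (A _ _); apply: val_inj; rewrite /= addn0.
have CS : C = (Smx R m)^T *m A *m Smx R m.
  by apply/matrixP => i j; rewrite Cw SAS.
have hC : hurwitz C by rewrite CS.
have mA' : metzler (block_mx C a b d).
  by rewrite -hA'; exact: (castP (P := fun n (X : 'M[R]_n) => metzler X) (esym e) mA).
have [mC a0 b0'] := metzler_blocks mA'.
have HC := hurwitz_Hpos hC.
have gC := Lmain mC HC.
have uC0 := unit_of_det (HC 0 (lexx 0)).
have uC : C \in unitmx by move: uC0; rewrite raddf0 sub0r unitmxN.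
have detC0 : \det C != 0 by rewrite -unitfE -unitmxE.
have dC0 : 0 < \det (- C) by have := HC 0 (lexx 0); rewrite raddf0 sub0r.
set s := (d - b *m invmx C *m a) 0 0.
have spos : 0 < s.
  have h : 0 <= (b *m - invmx C *m a) 0 0.
    rewrite mxE; apply: sumr_ge0 => l _; apply: mulr_ge0 => //.
    rewrite mxE; apply: sumr_ge0 => l' _; apply: mulr_ge0 => //.
    by rewrite mxE; apply: invnn.
  have -> : s = d 0 0 + (b *m - invmx C *m a) 0 0.
    by rewrite /s mulmxN mulNmx !mxE.
  rewrite dd; apply: ltr_wpDr => //.
  by move: dpos; rewrite /e_last dXd.
have detA : \det A = \det C * s.
  have := castP (P := fun n (X : 'M[R]_n) => \det X = \det A) (esym e) (erefl _).
  by rewrite -/(cst A) hA' schur // => <-.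
have gnE : gn = - s^-1.
  rewrite /gn /en /e_last dXd /invmx uA !mxE /cofactor.
  have -> : row' ord_max (col' ord_max A) = C.
    apply/matrixP => i j; rewrite Cw !mxE; congr (A _ _); apply: val_inj;
    by rewrite /= /bump leqNgt ltn_ord.
  rewrite addnn -signr_odd odd_double expr0 mul1r detA.
  by field; apply/andP; split => //; rewrite gt_eqF.
pose Abar := A - ustar *: (en *m en^T).
have EE : en *m en^T = delta_mx ord_max ord_max.
  by rewrite /en /e_last trmx_delta mul_delta_mx.
have nmax i : (cast_ord e (lshift 1 i) == ord_max) = false.
  by apply/negbTE; rewrite -val_eqE /= neq_ltn ltn_ord.
have ymax i : (cast_ord e (rshift m i) == ord_max).
  by rewrite -val_eqE /= ord1 addn0.
have Ab' : cst Abar = block_mx C a b (d - ustar%:M).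
  apply/matrixP => i j; rewrite -(splitK i) -(splitK j).
  case: (split i) => i'; case: (split j) => j' /=.
  - by rewrite block_mxEul /cst cstE /Abar EE !mxE nmax /= mulr0 subr0 /cst cstE.
  - by rewrite block_mxEur /cst cstE /Abar EE !mxE nmax /= mulr0 subr0 /cst cstE.
  - by rewrite block_mxEdl /cst cstE /Abar EE !mxE nmax andbF mulr0 subr0 /cst cstE.
  - rewrite block_mxEdr /cst cstE /Abar EE !mxE !ymax /= mulr1 !ord1 eqxx mulr1n.
    by rewrite /cst cstE.
have sbar : (d - ustar%:M - b *m invmx C *m a) 0 0 = s - ustar.
  by rewrite /s !mxE eqxx mulr1n; ring.
have rel : s - ustar = s * g0 / r.
  rewrite /ustar gnE; field; rewrite ?gt_eqF //.
have mAbar : metzler Abar.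
  move=> i j ne; rewrite /Abar EE !mxE.
  have -> : (i == ord_max) && (j == ord_max) = false.
    by apply/negbTE; apply: contra ne => /andP[/eqP -> /eqP ->].
  by rewrite mulr0 subr0; apply: mA.
split.
- move=> /hurwitz_Hpos HA.
  have := castP (P := fun n (X : 'M[R]_n) => Hpos X) (esym e) HA.
  rewrite -/(cst Abar) Ab' => /(_ 0 (lexx 0)).
  rewrite schurT // raddf0 sub0r invmxN // mulmxN mulNmx pmulr_rgt0 //.
  have -> : (0 - (d - ustar%:M) 0 0 - (- (b *m invmx C *m a)) 0 0)
      = - (d - ustar%:M - b *m invmx C *m a) 0 0 by rewrite !mxE; ring.
  rewrite sbar rel oppr_gt0 => h.
  by move: h; rewrite -mulrA pmulr_rlt0 // pmulr_llt0 ?invr_gt0.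
- move=> g0n.
  apply: gersh => //.
  have : goodM (cst Abar).
    rewrite Ab'; apply: step => //.
      by rewrite -Ab'; exact: (castP (P := fun n (X : 'M[R]_n) => metzler X) (esym e) mAbar).
    by rewrite sbar rel -mulrA pmulr_rlt0 // pmulr_llt0 ?invr_gt0.
  by move/(castP (P := fun n (X : 'M[R]_n) => goodM X) e); rewrite castmxKV.
Qed.
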